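(* Consider periods $t=0,1,\dots,T$ with treatment statuses $D_0=0,D_1,\dots,D_T\in\{0,1\}$ and outcomes $Y_t$, and covariates $X=(X_1,\dots,X_T)$. For $g\in\{1,\dots,T\}$ let $D^g=\mathbf 1\{(D_0,\dots,D_T)=(0,\dots,0,D_g=1,1,\dots,1)\}$ be the indicator of being first treated in period $g$ (and treated thereafter), and $D^0=\mathbf 1\{(D_0,\dots,D_T)=(0,\dots,0)\}$ the indicator of never being treated. Assume $\mathbb E[D^g]>0$ and $\mathbb E[D^0\mid X]>0$ a.s. Let $P^s(X)$, $s=0,\dots,T$, be postulated models for the propensity scores $\mathbb E[D^s\mid X]$, with $P^0(X)>0$, and let $\mu_0^t(X)$ be a postulated model for $\mathbb E[Y_t\mid D^0=1,X]$. Define $$\tau_t^{g,DR}=\frac{1}{\mathbb E[D^g]}\,\mathbb E\!\left[\Big(D^g-\frac{P^g(X)}{P^0(X)}D^0\Big)\big(Y_t-\mu_0^t(X)\big)\right],$$ and $\theta^t_{DIM}(g,x)=\mathbb E[Y_t\mid D^g=1,X=x]-\mathbb E[Y_t\mid D^0=1,X=x]$. If either $P^s(X)=\mathbb E[D^s\mid X]$ a.s. for all $s\in\{0,1,\dots,T\}$, or $\mu_0^t(X)=\mathbb E[Y_t\mid D^0=1,X]$ a.s. (not necessarily both), then $$\tau_t^{g,DR}=\int\theta^t_{DIM}(g,x)\,dF_{X\mid D^g=1}(x),$$ where $F_{X\mid D^g=1}$ is the conditional distribution of $X$ given $D^g=1$.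
   Context: This is the staggered-adoption setting: each unit is either never treated or is first treated in some period $g$ and remains treated afterwards. All expectations involved are assumed to exist and be finite. *)

(* Defs.v *)
From HB Require Import structures.
From mathcomp Require Import all_boot all_order all_algebra.
From mathcomp Require Import all_classical all_reals all_analysis.
Set Implicit Arguments. Unset Strict Implicit. Unset Printing Implicit Defensive.
Import Order.TTheory GRing.Theory Num.Theory.
Local Open Scope classical_set_scope.
Local Open Scope ring_scope.

Section Defs.
Context {d d' : measure_display} {Omega : measurableType d}
  {Xsp : measurableType d'} {R : realType}.

(* Cohort indicator over periods 0..T.
   cohort D T 0 w  : never treated, (D_0,...,D_T) = (0,...,0)        (D^0)
   cohort D T g w  (g >= 1) : (D_0,...,D_T) = (0,..,0,D_g = 1,1,..,1) (D^g) *)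
Definition cohort (D : nat -> Omega -> bool) (T g : nat) (w : Omega) : bool :=
  if g == 0%N then all (fun s => ~~ D s w) (iota 0 T.+1)
  else all (fun s => D s w == (g <= s)%N) (iota 0 T.+1).

Lemma measurable_all (l : seq nat) (f : nat -> Omega -> bool) :
  (forall s, measurable [set w | f s w]) ->
  measurable [set w | all (fun s => f s w) l].
Proof.
move=> mf; elim: l => [|a l IH] /=.
  by rewrite (_ : [set _ | true] = setT) //; apply/seteqP; split.
rewrite (_ : [set w | f a w && _] = [set w | f a w] `&` [set w | all (fun s => f s w) l]).
  exact: measurableI.
by apply/seteqP; split => w /= /andP.
Qed.

Lemma measurable_cohort (D : nat -> Omega -> bool) (T g : nat) :
  (forall s, measurable [set w | D s w]) ->
  measurable [set w | cohort D T g w].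
Proof.
move=> mD; rewrite /cohort; case: eqP => _; apply: measurable_all => s.
  rewrite (_ : [set w | ~~ D s w] = ~` [set w | D s w]); first exact: measurableC.
  by apply/seteqP; split => w /=; case: (D s w).
case: (g <= s)%N.
  rewrite (_ : [set w | D s w == true] = [set w | D s w]) //.
  by apply/seteqP; split => w /=; case: (D s w).
rewrite (_ : [set w | D s w == false] = ~` [set w | D s w]); first exact: measurableC.
by apply/seteqP; split => w /=; case: (D s w).
Qed.

(* f (a function of the covariates) is a version of E[Z | X]:
   the Kolmogorov defining property. *)
Definition is_cond_exp (P : probability Omega R) (X : Omega -> Xsp)
    (Z : Omega -> R) (f : Xsp -> R) : Prop :=
  [/\ measurable_fun setT f,
      P.-integrable setT (EFin \o Z),
      P.-integrable setT (EFin \o (f \o X)) &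
      forall A, measurable A ->
        (\int[P]_(w in X @^-1` A) (Z w)%:E =
         \int[P]_(w in X @^-1` A) (f (X w))%:E)%E].

(* f is a version of E[Z | G, X] (conditional expectation given the event G
   and the covariates X): the defining property on the sets G /\ {X in A}. *)
Definition is_cond_exp_given (P : probability Omega R) (X : Omega -> Xsp)
    (G : set Omega) (Z : Omega -> R) (f : Xsp -> R) : Prop :=
  [/\ measurable_fun setT f,
      P.-integrable G (EFin \o Z),
      P.-integrable G (EFin \o (f \o X)) &
      forall A, measurable A ->
        (\int[P]_(w in X @^-1` A `&` G) (Z w)%:E =
         \int[P]_(w in X @^-1` A `&` G) (f (X w))%:E)%E].

Lemma cond_scale_ge0 (P : probability Omega R) (G : set Omega) :
  0 <= (fine (P G))^-1.
Proof. by rewrite invr_ge0 fine_ge0 // measure_ge0. Qed.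

(* The conditional distribution F_{X | G} of X given the event G:
   A |-> P(X in A, G) / P(G), as a measure on the covariate space. *)
Definition cond_law (P : probability Omega R) (X : {mfun Omega >-> Xsp})
    (G : set Omega) (mG : measurable G) : set Xsp -> \bar R :=
  pushforward (mscale (NngNum (cond_scale_ge0 P G)) (mrestr P mG)) X.

End Defs.

(* Main.v *)
Require Import Defs.
From HB Require Import structures.
From mathcomp Require Import all_boot all_order all_algebra.
From mathcomp Require Import all_classical all_reals all_analysis.
From mathcomp Require Import measurable_realfun.
From mathcomp Require Import ring lra.
Import Order.TTheory GRing.Theory Num.Theory.
Local Open Scope classical_set_scope.
Local Open Scope ring_scope.

Section Aux.
Context {R : realType}.
Definition pp (x : R) := Num.max x 0.
Definition nn (x : R) := Num.max (- x) 0.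
Lemma ppnn x : pp x - nn x = x.
Proof. rewrite /pp /nn; have [x0|x0] := boolP (x <= 0); last rewrite -ltNge in x0. 
  by rewrite (max_r x0) max_l ?oppr_ge0// sub0r opprK.
by rewrite (max_l (ltW x0)) max_r ?subr0// oppr_le0 ltW.
Qed.
Lemma pp_ge0 x : 0 <= pp x. Proof. by rewrite /pp le_max lexx orbT. Qed.
Lemma nn_ge0 x : 0 <= nn x. Proof. by rewrite /nn le_max lexx orbT. Qed.
Lemma pp_le x : `|pp x| <= `|x|.
Proof. rewrite /pp; have [x0|x0] := boolP (x <= 0); last rewrite -ltNge in x0; first by rewrite (max_r x0) normr0.
by rewrite (max_l (ltW x0)). Qed.
Lemma nn_le x : `|nn x| <= `|x|.
Proof. rewrite /nn; have [x0|x0] := boolP (x <= 0); last rewrite -ltNge in x0; last by rewrite max_r ?normr0// oppr_le0 ltW.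
by rewrite max_l ?oppr_ge0// normrN. Qed.
Lemma mpp : measurable_fun setT pp.
Proof. by rewrite /pp; apply: measurable_maxr. Qed.
Lemma mnn : measurable_fun setT nn.
Proof. by rewrite /nn; apply: measurable_maxr => //; exact: measurable_funN. Qed.
Lemma le_mul1 (a b c : R) : `|a| <= 1 -> `|b| <= `|c| -> `|a * b| <= `|c|.
Proof. move=> ha hb; rewrite normrM -[`|c|]mul1r; apply: ler_pM => //. Qed.
Lemma le_mul2 (a b c e : R) : `|a| <= `|c| -> `|b| <= `|e| -> `|a * b| <= `|c * e|.
Proof. move=> ha hb; rewrite !normrM; apply: ler_pM => //. Qed.
Lemma indic_le (T : Type) (A : set T) x : `|\1_A x : R| <= 1.
Proof. by rewrite indicE; case: (_ \in _); rewrite ?normr1 ?normr0. Qed.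
Lemma indic_ge0 (T : Type) (A : set T) x : 0 <= \1_A x :> R.
Proof. by rewrite indicE. Qed.
End Aux.

Ltac mf := repeat first [ assumption | exact: measurable_cst | exact: measurable_id
  | exact: mpp | exact: mnn | (apply: measurable_indic; assumption)
  | apply: measurable_funM | apply: measurable_funD | apply: measurable_funB
  | apply: measurableT_comp ].

Section GL.
Local Open Scope ereal_scope.
Context d1 d2 d3 (T1 : measurableType d1) (T2 : measurableType d2)
  (S : measurableType d3) (R : realType).
Variables (mu1 : {measure set T1 -> \bar R}) (mu2 : {measure set T2 -> \bar R}).
Variables (p1 : T1 -> S) (p2 : T2 -> S) (a : T1 -> R) (b : T2 -> R).
Hypotheses (mp1 : measurable_fun setT p1) (mp2 : measurable_fun setT p2).
Hypotheses (ma : measurable_fun setT a) (mb : measurable_fun setT b).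
Hypotheses (a0 : forall x, (0 <= a x)%R) (b0 : forall x, (0 <= b x)%R).
Hypothesis hab : forall A, measurable A ->
  \int[mu1]_x ((\1_A (p1 x)) * a x)%:E = \int[mu2]_x ((\1_A (p2 x)) * b x)%:E.

Import HBNNSimple.

Let simple_eq (f : {nnsfun S >-> R}) :
  \int[mu1]_x (f (p1 x) * a x)%:E = \int[mu2]_x (f (p2 x) * b x)%:E.
Proof.
have mf r : measurable (f @^-1` [set r]).
  by rewrite -(setTI (_ @^-1` _)); exact: measurable_funP.
have H (d : measure_display) (T : measurableType d) (mu : {measure set T -> \bar R})
   (p : T -> S) (c : T -> R) : measurable_fun setT p -> measurable_fun setT c ->
   (forall x, (0 <= c x)%R) ->
   \int[mu]_x (f (p x) * c x)%:E =
   \sum_(k \in range f) (k%:E * \int[mu]_x ((\1_(f @^-1` [set k]) (p x)) * c x)%:E).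
  move=> mp mc c0.
  transitivity (\int[mu]_x (\sum_(k \in range f)
       (k%:E * (\1_(f @^-1` [set k]) (p x))%:E) * (c x)%:E)).
    apply: eq_integral => x _; rewrite fimfunE EFinM -fsumEFin//.
    rewrite -ge0_mule_fsuml//; last by move=> k; exact: nnfun_muleindic_ge0.
  rewrite (@ge0_integral_fsum _ _ _ mu _ measurableT _
     (fun k x => (k%:E * (\1_(f @^-1` [set k]) (p x))%:E * (c x)%:E)))//; last 2 first.
  - move=> k; apply: emeasurable_funM; last exact/measurable_EFinP.
    apply/measurable_EFinP; apply: measurable_funM => //.
    apply: measurableT_comp => //; exact: measurable_indic.
  - by move=> k x _; rewrite mule_ge0// ?nnfun_muleindic_ge0// lee_fin.
  apply: eq_fsbigr => k /[!inE] -[y _ <-].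
  rewrite -ge0_integralZl_EFin//; last 2 first.
  - by move=> x _; rewrite lee_fin mulr_ge0.
  - apply/measurable_EFinP; apply: measurable_funM => //.
    apply: measurableT_comp => //; exact: measurable_indic.
  congr (integral _ _ _); apply/funext => x.
  by rewrite -!EFinM mulrA.
rewrite !H//; apply: eq_fsbigr => k _; by rewrite hab.
Qed.

Lemma GL (h : S -> R) : measurable_fun setT h -> (forall y, (0 <= h y)%R) ->
  \int[mu1]_x (h (p1 x) * a x)%:E = \int[mu2]_x (h (p2 x) * b x)%:E.
Proof.
move=> mh h0.
have mEh : measurable_fun setT (EFin \o h) by exact/measurable_EFinP.
pose f_ := nnsfun_approx measurableT mEh.
have H (d : measure_display) (T : measurableType d) (mu : {measure set T -> \bar R})
   (p : T -> S) (c : T -> R) : measurable_fun setT p -> measurable_fun setT c ->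
   (forall x, (0 <= c x)%R) ->
   \int[mu]_x (h (p x) * c x)%:E =
   limn (fun n => \int[mu]_x (f_ n (p x) * c x)%:E).
  move=> mp mc c0.
  rewrite -monotone_convergence//; last 3 first.
  - move=> n; apply/measurable_EFinP; apply: measurable_funM => //.
    exact: measurableT_comp.
  - by move=> n x _; rewrite lee_fin mulr_ge0.
  - move=> x _ m n mn; rewrite lee_fin ler_wpM2r//.
    exact/lefP/nd_nnsfun_approx.
  apply: eq_integral => x _; apply/esym/cvg_lim => //.
  under eq_fun do rewrite EFinM.
  rewrite EFinM; apply: cvgeZr => //.
  by apply: cvg_nnsfun_approx => // t _; rewrite lee_fin.
rewrite !H//; by under eq_fun do rewrite simple_eq.
Qed.
End GL.

Section DL.
Context d d' (Omega : measurableType d) (Xsp : measurableType d') (R : realType).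
Variable P : {measure set Omega -> \bar R}.
Variable X : Omega -> Xsp.
Hypothesis mX : measurable_fun setT X.

Lemma INTd (f g : Omega -> R) : measurable_fun setT f ->
  (forall w, `|f w| <= `|g w|) -> P.-integrable setT (EFin \o g) ->
  P.-integrable setT (EFin \o f).
Proof.
move=> mf' fg ig; apply: le_integrable ig => //.
  exact/measurable_EFinP.
by move=> w _; rewrite /= lee_fin.
Qed.

Lemma INTB (f g : Omega -> R) : P.-integrable setT (EFin \o f) ->
  P.-integrable setT (EFin \o g) ->
  P.-integrable setT (EFin \o (fun w => f w - g w)).
Proof.
move=> i1 i2; have := integrableB measurableT i1 i2.
by apply: (eq_integrable measurableT) => w _ /=; rewrite EFinB.
Qed.

Lemma INTD (f g : Omega -> R) : P.-integrable setT (EFin \o f) ->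
  P.-integrable setT (EFin \o g) ->
  P.-integrable setT (EFin \o (fun w => f w + g w)).
Proof.
move=> i1 i2; have := integrableD measurableT i1 i2.
by apply: (eq_integrable measurableT) => w _ /=; rewrite EFinD.
Qed.

Lemma RE (f : Omega -> R) : P.-integrable setT (EFin \o f) ->
  (\int[P]_w (f w)%:E = (Rintegral P setT f)%:E)%E.
Proof. by move=> i; rewrite /Rintegral fineK//; exact: integrable_fin_num. Qed.



Lemma DL (Z F : Omega -> R) (h : Xsp -> R) :
  measurable_fun setT Z -> measurable_fun setT F -> measurable_fun setT h ->
  P.-integrable setT (EFin \o Z) -> P.-integrable setT (EFin \o F) ->
  (forall A, measurable A -> (\int[P]_w (\1_A (X w) * Z w)%:E =
                              \int[P]_w (\1_A (X w) * F w)%:E)%E) ->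
  P.-integrable setT (EFin \o (fun w => h (X w) * Z w)) ->
  P.-integrable setT (EFin \o (fun w => h (X w) * F w)) ->
  Rintegral P setT (fun w => h (X w) * Z w) = Rintegral P setT (fun w => h (X w) * F w).
Proof.
move=> mZ mF mh iZ iF hyp ihZ ihF.
have iZ1 (A : set Xsp) (v : R -> R) : measurable A -> measurable_fun setT v ->
    (forall x, `|v x| <= `|x|) ->
    P.-integrable setT (EFin \o (fun w => \1_A (X w) * v (Z w))).
  move=> mA mv hv; apply: (INTd _ (Z)) => //; first by mf.
  by move=> w; apply: le_mul1; [exact: indic_le|exact: hv].
have iF1 (A : set Xsp) (v : R -> R) : measurable A -> measurable_fun setT v ->
    (forall x, `|v x| <= `|x|) ->
    P.-integrable setT (EFin \o (fun w => \1_A (X w) * v (F w))).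
  move=> mA mv hv; apply: (INTd _ (F)) => //; first by mf.
  by move=> w; apply: le_mul1; [exact: indic_le|exact: hv].
have iZh (u : Xsp -> R) (v : R -> R) : measurable_fun setT u -> measurable_fun setT v ->
    (forall y, `|u y| <= `|h y|) -> (forall x, `|v x| <= `|x|) ->
    P.-integrable setT (EFin \o (fun w => u (X w) * v (Z w))).
  move=> mu mv hu hv; apply: (INTd _ (fun w => h (X w) * Z w)) => //; first by mf.
  by move=> w; apply: le_mul2.
have iFh (u : Xsp -> R) (v : R -> R) : measurable_fun setT u -> measurable_fun setT v ->
    (forall y, `|u y| <= `|h y|) -> (forall x, `|v x| <= `|x|) ->
    P.-integrable setT (EFin \o (fun w => u (X w) * v (F w))).
  move=> mu mv hu hv; apply: (INTd _ (fun w => h (X w) * F w)) => //; first by mf.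
  by move=> w; apply: le_mul2.
have lid (x : R) : `|x| <= `|x| by [].
have midR : measurable_fun setT (fun x : R => x) by exact: measurable_id.
have key (q : Xsp -> R) : measurable_fun setT q -> (forall y, 0 <= q y) ->
    (forall y, `|q y| <= `|h y|) ->
    Rintegral P setT (fun w => q (X w) * pp (Z w)) +
    Rintegral P setT (fun w => q (X w) * nn (F w)) =
    Rintegral P setT (fun w => q (X w) * nn (Z w)) +
    Rintegral P setT (fun w => q (X w) * pp (F w)).
  move=> mq q0 qh.
  have ma : measurable_fun setT (fun w => pp (Z w) + nn (F w)) by mf.
  have mb : measurable_fun setT (fun w => nn (Z w) + pp (F w)) by mf.
  have a0 w : 0 <= pp (Z w) + nn (F w) by rewrite addr_ge0 ?pp_ge0 ?nn_ge0.
  have b0 w : 0 <= nn (Z w) + pp (F w) by rewrite addr_ge0 ?pp_ge0 ?nn_ge0.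
  have hab (A : set Xsp) : measurable A ->
    (\int[P]_x (\1_A (X x) * (pp (Z x) + nn (F x)))%:E =
     \int[P]_x (\1_A (X x) * (nn (Z x) + pp (F x)))%:E)%E.
    move=> mA.
    have HA : Rintegral P setT (fun w => \1_A (X w) * Z w) =
              Rintegral P setT (fun w => \1_A (X w) * F w).
      apply: EFin_inj; rewrite -(RE _ (iZ1 A id mA midR lid)).
      rewrite -(RE _ (iF1 A id mA midR lid)); exact: hyp.
    under eq_integral do rewrite mulrDr EFinD.
    under [in RHS]eq_integral do rewrite mulrDr EFinD.
    rewrite integralD//; [|exact: (iZ1 A pp mA mpp pp_le)|exact: (iF1 A nn mA mnn nn_le)].
    rewrite [in RHS]integralD//; [|exact: (iZ1 A nn mA mnn nn_le)|exact: (iF1 A pp mA mpp pp_le)].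
    rewrite (RE _ (iZ1 A pp mA mpp pp_le)) (RE _ (iF1 A nn mA mnn nn_le)).
    rewrite (RE _ (iZ1 A nn mA mnn nn_le)) (RE _ (iF1 A pp mA mpp pp_le)) -!EFinD.
    congr EFin.
    have eZ : Rintegral P setT (fun w => \1_A (X w) * Z w) =
      Rintegral P setT (fun w => \1_A (X w) * pp (Z w)) -
      Rintegral P setT (fun w => \1_A (X w) * nn (Z w)).
      rewrite -RintegralB//; [|exact: (iZ1 A pp mA mpp pp_le)|exact: (iZ1 A nn mA mnn nn_le)].
      by apply: eq_Rintegral => w _; rewrite -mulrBr ppnn.
    have eF : Rintegral P setT (fun w => \1_A (X w) * F w) =
      Rintegral P setT (fun w => \1_A (X w) * pp (F w)) -
      Rintegral P setT (fun w => \1_A (X w) * nn (F w)).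
      rewrite -RintegralB//; [|exact: (iF1 A pp mA mpp pp_le)|exact: (iF1 A nn mA mnn nn_le)].
      by apply: eq_Rintegral => w _; rewrite -mulrBr ppnn.
    move: HA; rewrite eZ eF => HA.
    lra.
  have H := @GL _ _ _ Omega Omega Xsp R P P X X (fun w => pp (Z w) + nn (F w))
    (fun w => nn (Z w) + pp (F w)) mX mX ma mb a0 b0 hab q mq q0.
  have e1 : (fun w => (q (X w) * (pp (Z w) + nn (F w)))%:E) =
    (fun w => (q (X w) * pp (Z w))%:E + (q (X w) * nn (F w))%:E)%E.
    by apply/funext => w; rewrite mulrDr EFinD.
  have e2 : (fun w => (q (X w) * (nn (Z w) + pp (F w)))%:E) =
    (fun w => (q (X w) * nn (Z w))%:E + (q (X w) * pp (F w))%:E)%E.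
    by apply/funext => w; rewrite mulrDr EFinD.
  move: H; rewrite e1 e2.
  rewrite integralD//; [|exact: (iZh q pp mq mpp qh pp_le)|exact: (iFh q nn mq mnn qh nn_le)].
  rewrite [in X in _ = X]integralD//; [|exact: (iZh q nn mq mnn qh nn_le)|exact: (iFh q pp mq mpp qh pp_le)].
  rewrite (RE _ (iZh q pp mq mpp qh pp_le)) (RE _ (iFh q nn mq mnn qh nn_le)).
  rewrite (RE _ (iZh q nn mq mnn qh nn_le)) (RE _ (iFh q pp mq mpp qh pp_le)) -!EFinD.
  by case.
have mph : measurable_fun setT (fun y => pp (h y)) by mf.
have mnh : measurable_fun setT (fun y => nn (h y)) by mf.
have kp := key _ mph (fun y => pp_ge0 _) (fun y => pp_le _).
have kn := key _ mnh (fun y => nn_ge0 _) (fun y => nn_le _).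
have ppl (y : Xsp) : `|pp (h y)| <= `|h y| by exact: pp_le.
have nnl (y : Xsp) : `|nn (h y)| <= `|h y| by exact: nn_le.
have dec (V : Omega -> R) (mV : measurable_fun setT V)
  (iV : forall (u : Xsp -> R) (v : R -> R), measurable_fun setT u -> measurable_fun setT v ->
    (forall y, `|u y| <= `|h y|) -> (forall x, `|v x| <= `|x|) ->
    P.-integrable setT (EFin \o (fun w => u (X w) * v (V w)))) :
  Rintegral P setT (fun w => h (X w) * V w) =
  (Rintegral P setT (fun w => pp (h (X w)) * pp (V w)) -
   Rintegral P setT (fun w => pp (h (X w)) * nn (V w))) -
  (Rintegral P setT (fun w => nn (h (X w)) * pp (V w)) -
   Rintegral P setT (fun w => nn (h (X w)) * nn (V w))).
  have i1 := iV _ _ mph mpp ppl pp_le.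
  have i2 := iV _ _ mph mnn ppl nn_le.
  have i3 := iV _ _ mnh mpp nnl pp_le.
  have i4 := iV _ _ mnh mnn nnl nn_le.
  rewrite -RintegralB// -[X in _ - X]RintegralB//.
  rewrite -RintegralB//; [|exact: INTB|exact: INTB].
  apply: eq_Rintegral => w _.
  rewrite -{1}(ppnn (h (X w))) -{1}(ppnn (V w)); ring.
rewrite (dec Z mZ iZh) (dec F mF iFh); lra.
Qed.
End DL.
Arguments INTd {d Omega R P} f g.
Arguments INTB {d Omega R P} f g.
Arguments INTD {d Omega R P} f g.
Arguments RE {d Omega R P} f.

Set Implicit Arguments. Unset Strict Implicit.
Local Open Scope classical_set_scope.
Local Open Scope ring_scope.

Lemma mV (R : realType) : measurable_fun setT (@GRing.inv R).
Proof.
have -> : [set: R] = [set x | x != 0] `|` [set 0].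
  apply/seteqP; split => x // _; case: (eqVneq x 0) => [->|x0]; [right|left] => //.
apply/measurable_funU => //.
  have -> : [set x : R | x != 0] = ~` [set 0].
    by apply/seteqP; split => x /=; [move/eqP|move=> h; apply/eqP].
  exact: measurableC.
split; last exact: measurable_fun_set1.
apply: open_continuous_measurable_fun; first exact: open_neq.
by move=> x; rewrite inE => x0; exact: inv_continuous.
Qed.

Section L2.
Context d d' (Omega : measurableType d) (Xsp : measurableType d') (R : realType).
Variable P : probability Omega R.
Variable X : {mfun Omega >-> Xsp}.
Lemma mX : measurable_fun setT X. Proof. exact: measurable_funP. Qed.

Lemma ppE (r : R) : Order.max r%:E 0%E = (pp r)%:E.
Proof.
rewrite /pp; have [r0|r0] := boolP (r <= 0); last rewrite -ltNge in r0.
  by rewrite max_r ?lee_fin// max_r.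
by rewrite max_l ?lee_fin ?ltW// max_l// ltW.
Qed.

Lemma nnE (r : R) : Order.max (- r%:E)%E 0%E = (nn r)%:E.
Proof. by rewrite -EFinN ppE. Qed.

Lemma boolE (b : Omega -> bool) w : (b w)%:R = \1_[set w | b w] w :> R.
Proof.
rewrite indicE. have -> : (w \in [set w | b w]) = b w by apply/idP/idP; rewrite inE.
by [].
Qed.

Lemma natb_le (b : bool) : `|b%:R : R| <= 1.
Proof. by case: b; rewrite ?normr1 ?normr0. Qed.

Lemma MKG (G : set Omega) (f : Omega -> R) :
  (\int[P]_(w in G) (f w)%:E = \int[P]_w (\1_G w * f w)%:E)%E.
Proof.
rewrite integral_mkcond; apply: eq_integral => w _.
rewrite patchE indicE; case: (boolP (w \in G)) => _; first by rewrite mul1r.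
by rewrite mul0r.
Qed.

Lemma MK2 (G : set Omega) (A : set Xsp) (f : Omega -> R) :
  (\int[P]_(w in X @^-1` A `&` G) (f w)%:E =
   \int[P]_w (\1_A (X w) * (\1_G w * f w))%:E)%E.
Proof.
rewrite MKG; apply: eq_integral => w _.
by rewrite indicI /= mulrA; congr (_ * _ * _)%:E; rewrite !indicE.
Qed.

Lemma INTG (G : set Omega) (mG : measurable G) (f : Omega -> R) :
  P.-integrable G (EFin \o f) ->
  P.-integrable setT (EFin \o (fun w => \1_G w * f w)).
Proof.
move=> /(integrable_mkcond _ mG) i.
apply: (eq_integrable measurableT) i => w _ /=.
rewrite patchE indicE; case: (boolP (w \in G)) => _; first by rewrite mul1r.
by rewrite mul0r.
Qed.

Lemma POS (Z : Omega -> R) (f : Xsp -> R) : is_cond_exp P X Z f ->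
  (forall w, 0 <= Z w) -> {ae P, forall w, 0 <= f (X w)}.
Proof.
case=> mf iZ ifX hyp Z0; have mXX := mX.
pose A := f @^-1` `]-oo, 0[.
have mA : measurable A by rewrite /A -(setTI (_ @^-1` _)); apply: mf => //.
pose B := X @^-1` A.
have mB : measurable B by rewrite /B -(setTI (_ @^-1` _)); exact: mX.
have fB w : B w -> f (X w) < 0 by rewrite /B /A /= in_itv /=.
have mfX : measurable_fun B (fun w => (f (X w))%:E).
  apply/measurable_EFinP; apply: measurable_funTS; exact: measurableT_comp.
have h1 : (\int[P]_(w in B) (- (f (X w))%:E) = - \int[P]_(w in B) (f (X w))%:E)%E.
  have := @integral_ge0N _ _ _ P B (fun w => - (f (X w))%:E)%E.
  have H0 : forall w, B w -> (0 <= - (f (X w))%:E)%E.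
    by move=> w /fB ?; rewrite -EFinN lee_fin oppr_ge0 ltW.
  move=> /(_ H0); under eq_integral do rewrite oppeK.
  by move=> ->; rewrite oppeK.
have h0 : (\int[P]_(w in B) `|(f (X w))%:E| = 0)%E.
  rewrite (eq_integral (fun w => - (f (X w))%:E)%E); last first.
    move=> w /[!inE] /fB ?; rewrite abse_EFin -EFinN; congr EFin.
    by rewrite ltr0_norm.
  rewrite h1 -(hyp A mA); apply/eqP; rewrite eq_le; apply/andP; split.
    rewrite leeNl oppe0; apply: integral_ge0 => w _; rewrite lee_fin; exact: Z0.
  rewrite (hyp A mA) -h1; apply: integral_ge0 => w /fB ?.
  by rewrite -EFinN lee_fin oppr_ge0 ltW.
have := (ae_eq_integral_abs P mB mfX).1 h0.
apply: filterS => w /= hw; rewrite leNgt; apply/negP => fw.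
have Bw : B w by rewrite /B /A /= in_itv.
by move: (hw Bw) => /= /eqP; rewrite eqe (lt_eqF fw).
Qed.

Lemma RHSL (G : set Omega) (mG : measurable G) (f : Xsp -> R) :
  measurable_fun setT f ->
  P.-integrable setT (EFin \o (fun w => \1_G w * f (X w))) ->
  (\int[cond_law P X mG]_x (f x)%:E)%E =
  ((fine (P G))^-1 * Rintegral P setT (fun w => \1_G w * f (X w)))%:E.
Proof.
move=> mf iGf; have mXX := mX.
set c := (fine (P G))^-1.
have c0 : 0 <= c := cond_scale_ge0 P G.
have key (v : R -> R) : measurable_fun setT v -> (forall r, 0 <= v r) ->
    (forall r, `|v r| <= `|r|) ->
    (\int[cond_law P X mG]_x (v (f x))%:E =
     (c * Rintegral P setT (fun w => \1_G w * v (f (X w))))%:E)%E.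
  move=> mv v0 vle.
  have mb : measurable_fun setT (fun w => c * \1_G w).
    by apply: measurable_funM => //; exact: measurable_indic.
  have hab (A : set Xsp) : measurable A ->
      (\int[cond_law P X mG]_x (\1_A (id x) * cst 1 x)%:E =
       \int[P]_w (\1_A (X w) * (c * \1_G w))%:E)%E.
    move=> mA.
    under eq_integral do rewrite mulr1.
    rewrite integral_indic// setIT /cond_law /pushforward /= /mscale /mrestr /=.
    rewrite (eq_integral (fun w => c%:E * (\1_(X @^-1` A `&` G) w)%:E)%E); last first.
      move=> w _; rewrite -EFinM indicI /= mulrCA; congr (_ * (_ * _))%:E.
    have mXAG : measurable (X @^-1` A `&` G).
      by apply: measurableI => //; exact: measurable_funPTI.
    rewrite ge0_integralZl_EFin//; try by [move=> w _; rewrite lee_fin indic_ge0|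
      apply/measurable_EFinP; exact: measurable_indic].
    rewrite integral_indic ?setIT//.
  have := @GL _ _ _ Xsp Omega Xsp R (cond_law P X mG) P id X (cst 1)
    (fun w => c * \1_G w) (@measurable_id _ _ _) mX (measurable_cst _) mb
    (fun _ => ler01) (fun w => mulr_ge0 c0 (indic_ge0 _ _ _)) hab (v \o f)
    (measurableT_comp mv mf) (fun y => v0 _).
  move=> H.
  rewrite (_ : (\int[cond_law P X mG]_x (v (f x))%:E =
    \int[cond_law P X mG]_x (v (f (id x)) * cst 1 x)%:E)%E); last first.
    by congr (integral _ _ _); apply/funext => x /=; rewrite mulr1.
  rewrite H.
  have iv : P.-integrable setT (EFin \o (fun w => \1_G w * v (f (X w)))).
    apply: (INTd _ (fun w => \1_G w * f (X w))) => //; first by mf.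
    by move=> w; apply: le_mul2.
  rewrite EFinM -(RE _ iv) -ge0_integralZl_EFin//; last 2 first.
  - by move=> w _; rewrite lee_fin mulr_ge0 ?indic_ge0.
  - by apply/measurable_EFinP; mf.
  by congr (integral _ _ _); apply/funext => w /=; rewrite -EFinM; congr EFin; ring.
  exact: mX.
transitivity (\int[cond_law P X mG]_x ((EFin \o f) x))%E; first by [].
rewrite integralE.
under eq_integral do rewrite funeposE /= ppE.
under [X in (_ - X)%E]eq_integral do rewrite funenegE /= nnE.
rewrite (key pp mpp pp_ge0 pp_le) (key nn mnn nn_ge0 nn_le) -EFinB -mulrBr.
congr (_ * _)%:E.
have iv (v : R -> R) : measurable_fun setT v -> (forall r, `|v r| <= `|r|) ->
    P.-integrable setT (EFin \o (fun w => \1_G w * v (f (X w)))).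
  move=> mv vle; apply: (INTd _ (fun w => \1_G w * f (X w))) => //; first by mf.
  by move=> w; apply: le_mul2.
rewrite -RintegralB//; [|exact: iv mpp pp_le|exact: iv mnn nn_le].
by apply: eq_Rintegral => w _; rewrite -mulrBr ppnn.
Qed.

Lemma PS (c0 cg : Omega -> R) (e0 eg Pg P0 q : Xsp -> R) :
  measurable_fun setT c0 -> measurable_fun setT cg ->
  (forall w, 0 <= c0 w) -> (forall w, 0 <= cg w) ->
  measurable_fun setT e0 -> measurable_fun setT eg ->
  measurable_fun setT Pg -> measurable_fun setT P0 ->
  measurable_fun setT q -> (forall y, 0 <= q y) ->
  (forall A, measurable A -> (\int[P]_w (\1_A (X w) * c0 w)%:E =
     \int[P]_w (\1_A (X w) * pp (e0 (X w)))%:E)%E) ->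
  (forall A, measurable A -> (\int[P]_w (\1_A (X w) * cg w)%:E =
     \int[P]_w (\1_A (X w) * pp (eg (X w)))%:E)%E) ->
  {ae P, forall w, Pg (X w) = eg (X w) /\ P0 (X w) = e0 (X w) /\
                   0 < e0 (X w) /\ 0 <= eg (X w)} ->
  (forall w, 0 < P0 (X w)) ->
  (\int[P]_w (Pg (X w) / P0 (X w) * c0 w * q (X w))%:E =
   \int[P]_w (cg w * q (X w))%:E)%E.
Proof.
move=> mc0 mcg c00 cg0 me0 meg mPg mP0 mq q0 h0 hg hae P0pos.
have mXX := mX.
pose rho y := pp (Pg y) / pp (P0 y) * q y.
have rho0 y : 0 <= rho y by rewrite /rho mulr_ge0 ?divr_ge0 ?pp_ge0.
have mrho : measurable_fun setT rho.
  rewrite /rho; apply: measurable_funM => //; apply: measurable_funM.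
    exact: measurableT_comp mpp mPg.
  by apply: measurableT_comp (@mV R) _; exact: measurableT_comp mpp mP0.
have mVP0 : measurable_fun setT (fun w => (P0 (X w))^-1).
  by apply: measurableT_comp (@mV R) _; exact: measurableT_comp.
transitivity (\int[P]_w (rho (X w) * c0 w)%:E)%E.
  have mL : measurable_fun setT (fun w => (Pg (X w) / P0 (X w) * c0 w * q (X w))%:E).
    apply/measurable_EFinP; apply: measurable_funM; last exact: measurableT_comp.
    apply: measurable_funM => //; apply: measurable_funM => //; exact: measurableT_comp.
  have mR : measurable_fun setT (fun w => (rho (X w) * c0 w)%:E).
    apply/measurable_EFinP; apply: measurable_funM => //; exact: measurableT_comp.
  apply: (ae_eq_integral _ _ measurableT mL mR).
  apply: filterS hae => w [h1 [h2 [h3 h4]]] _.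
  have p0 := P0pos w.
  rewrite /rho /pp (max_l (ltW p0)) h1 (max_l h4) -h1; congr EFin; ring.
rewrite (@GL _ _ _ Omega Omega Xsp R P P X X c0 (fun w => pp (e0 (X w))) mXX mXX
  mc0 _ c00 (fun w => pp_ge0 _) h0 rho mrho rho0); last first.
  exact: measurableT_comp mpp (measurableT_comp me0 mXX).
transitivity (\int[P]_w (q (X w) * pp (eg (X w)))%:E)%E.
  have mL : measurable_fun setT (fun w => (rho (X w) * pp (e0 (X w)))%:E).
    apply/measurable_EFinP; apply: measurable_funM; first exact: measurableT_comp.
    exact: measurableT_comp mpp (measurableT_comp me0 mXX).
  have mR : measurable_fun setT (fun w => (q (X w) * pp (eg (X w)))%:E).
    apply/measurable_EFinP; apply: measurable_funM; first exact: measurableT_comp.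
    exact: measurableT_comp mpp (measurableT_comp meg mXX).
  apply: (ae_eq_integral _ _ measurableT mL mR).
  apply: filterS hae => w [h1 [h2 [h3 h4]]] _.
  have p0 := P0pos w.
  rewrite /rho /pp (max_l (ltW p0)) h1 (max_l h4) h2 (max_l (ltW h3)).
  congr EFin; rewrite mulrAC divfK ?gt_eqF//; ring.
rewrite -(@GL _ _ _ Omega Omega Xsp R P P X X cg (fun w => pp (eg (X w))) mXX mXX
  mcg _ cg0 (fun w => pp_ge0 _) hg q mq q0); last first.
  exact: measurableT_comp mpp (measurableT_comp meg mXX).
by apply: eq_integral => w _; rewrite mulrC.
Qed.

Lemma CEG (G : set Omega) (Z : Omega -> R) (f : Xsp -> R) :
  is_cond_exp_given P X G Z f -> forall A, measurable A ->
  (\int[P]_w (\1_A (X w) * (\1_G w * Z w))%:E =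
   \int[P]_w (\1_A (X w) * (\1_G w * f (X w)))%:E)%E.
Proof. by case=> _ _ _ hyp A mA; rewrite -!MK2; exact: hyp. Qed.

Lemma CE (Z : Omega -> R) (f : Xsp -> R) :
  is_cond_exp P X Z f -> forall A, measurable A ->
  (\int[P]_w (\1_A (X w) * Z w)%:E =
   \int[P]_w (\1_A (X w) * f (X w))%:E)%E.
Proof.
case=> _ _ _ hyp A mA.
have e (F : Omega -> R) : (\int[P]_w (\1_A (X w) * F w)%:E =
    \int[P]_(w in X @^-1` A `&` setT) (F w)%:E)%E.
  by rewrite MK2; apply: eq_integral => w _; rewrite indicT mul1r.
by rewrite !e setIT; exact: hyp.
Qed.

End L2.

Unset Implicit Arguments. Set Strict Implicit.

Theorem proposition7 (d d' : measure_display) (Omega : measurableType d)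
  (Xsp : measurableType d') (R : realType) (P : probability Omega R)
  (T : nat) (D : nat -> Omega -> bool) (Y : nat -> Omega -> R)
  (X : {mfun Omega >-> Xsp})
  (mD : forall s, measurable [set w | D s w])
  (g t : nat)
  (Pm : nat -> Xsp -> R) (mu : Xsp -> R)
  (e : nat -> Xsp -> R) (mg m0 : Xsp -> R) :
  (* setting: D_0 = 0, staggered adoption, 1 <= g <= T, 0 <= t <= T *)
  (forall w, D 0%N w = false) ->
  (forall w, exists s, (s <= T)%N /\ cohort D T s w) ->
  (1 <= g <= T)%N -> (t <= T)%N ->
  (* measurability / existence and finiteness of the expectations involved *)
  (forall s, measurable_fun setT (Y s)) ->
  P.-integrable setT (EFin \o Y t) ->
  (forall s, measurable_fun setT (Pm s)) ->
  measurable_fun setT mu ->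
  P.-integrable setT (fun w => ((cohort D T g w)%:R * mu (X w))%:E) ->
  P.-integrable setT (fun w =>
     (Pm g (X w) / Pm 0%N (X w) * (cohort D T 0 w)%:R * Y t w)%:E) ->
  P.-integrable setT (fun w =>
     (Pm g (X w) / Pm 0%N (X w) * (cohort D T 0 w)%:R * mu (X w))%:E) ->
  P.-integrable setT (fun w =>
     (Pm g (X w) / Pm 0%N (X w) * (cohort D T 0 w)%:R * m0 (X w))%:E) ->
  P.-integrable setT (fun w => ((cohort D T g w)%:R * m0 (X w))%:E) ->
  (* e s is (a version of) the propensity score E[D^s | X] *)
  (forall s, (s <= T)%N -> is_cond_exp P X (fun w => (cohort D T s w)%:R) (e s)) ->
  (* mg, m0 are (versions of) E[Y_t | D^g = 1, X], E[Y_t | D^0 = 1, X] *)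
  is_cond_exp_given P X [set w | cohort D T g w] (Y t) mg ->
  is_cond_exp_given P X [set w | cohort D T 0 w] (Y t) m0 ->
  (* E[D^g] > 0 and E[D^0 | X] > 0 a.s. *)
  0 < Rintegral P setT (fun w => (cohort D T g w)%:R) ->
  {ae P, forall w, 0 < e 0%N (X w)} ->
  (* the postulated P^0(X) is positive *)
  (forall w, 0 < Pm 0%N (X w)) ->
  (* double robustness: either all propensity models or the outcome model
     are correctly specified *)
  ((forall s, (s <= T)%N -> {ae P, forall w, Pm s (X w) = e s (X w)}) \/
   {ae P, forall w, mu (X w) = m0 (X w)}) ->
  ((Rintegral P setT (fun w => (cohort D T g w)%:R))^-1 *
   Rintegral P setT (fun w =>
     ((cohort D T g w)%:R - Pm g (X w) / Pm 0%N (X w) * (cohort D T 0 w)%:R)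
     * (Y t w - mu (X w))))%:E
  = (\int[cond_law P X (measurable_cohort T g mD)]_x (mg x - m0 x)%:E)%E.
Proof.
move=> hD0 hcov hg ht mY iY mPm mmu igmu irY irmu irm0 igm0 he hmg hm0 hN hepos hPm0 hcase.
set G := [set w | cohort D T g w].
set G0 := [set w | cohort D T 0 w].
have mG : measurable G := measurable_cohort T g mD.
have mG0 : measurable G0 := measurable_cohort T 0 mD.
have mXX : measurable_fun setT X := measurable_funP X.
have bg w : (cohort D T g w)%:R = \1_G w :> R by exact: boolE.
have b0 w : (cohort D T 0 w)%:R = \1_G0 w :> R by exact: boolE.
have mcg : measurable_fun setT (fun w => (cohort D T g w)%:R : R).
  by rewrite (funext bg); exact: measurable_indic.
have mc0 : measurable_fun setT (fun w => (cohort D T 0 w)%:R : R).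
  by rewrite (funext b0); exact: measurable_indic.
have [mmg _ imgG _] : is_cond_exp_given P X G (Y t) mg := hmg.
have [mm0 _ im0G _] : is_cond_exp_given P X G0 (Y t) m0 := hm0.
have ig_mg : P.-integrable setT (EFin \o (fun w => (cohort D T g w)%:R * mg (X w))).
  apply: (eq_integrable measurableT) (INTG mG imgG) => w _ /=; by rewrite bg.
have ig_m0 : P.-integrable setT (EFin \o (fun w => (cohort D T g w)%:R * m0 (X w))) by [].
rewrite RHSL; last 2 first.
- by apply: measurable_funB.
- apply: (eq_integrable measurableT) (INTB _ _ ig_mg ig_m0) => w _ /=; by rewrite bg mulrBr.
have NE : Rintegral P setT (fun w => (cohort D T g w)%:R) = fine (P G).
  rewrite /Rintegral; congr fine; under eq_integral do rewrite bg.
  by rewrite integral_indic// setIT.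
rewrite NE; congr (_ * _)%:E.
pose cY := fun w => (cohort D T g w)%:R * Y t w.
pose cmu := fun w => (cohort D T g w)%:R * mu (X w).
pose cmg := fun w => (cohort D T g w)%:R * mg (X w).
pose cm0 := fun w => (cohort D T g w)%:R * m0 (X w).
pose rY := fun w => Pm g (X w) / Pm 0%N (X w) * (cohort D T 0 w)%:R * Y t w.
pose rmu := fun w => Pm g (X w) / Pm 0%N (X w) * (cohort D T 0 w)%:R * mu (X w).
pose rm0 := fun w => Pm g (X w) / Pm 0%N (X w) * (cohort D T 0 w)%:R * m0 (X w).
have icY : P.-integrable setT (EFin \o cY).
  apply: (INTd _ (Y t)) => //; first by apply: measurable_funM.
  by move=> w; apply: le_mul1 => //; exact: natb_le.
have icmu : P.-integrable setT (EFin \o cmu) by [].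
have icmg : P.-integrable setT (EFin \o cmg) by [].
have icm0 : P.-integrable setT (EFin \o cm0) by [].
have irY' : P.-integrable setT (EFin \o rY) by [].
have irmu' : P.-integrable setT (EFin \o rmu) by [].
have irm0' : P.-integrable setT (EFin \o rm0) by [].
transitivity (Rintegral P setT (fun w => cY w - cmu w - rY w + rmu w)).
  by apply: eq_Rintegral => w _; rewrite /cY /cmu /rY /rmu; ring.
transitivity (Rintegral P setT (fun w => cmg w - cm0 w)); last first.
  by apply: eq_Rintegral => w _; rewrite /cmg /cm0 bg mulrBr.
rewrite RintegralD//; last exact: INTB _ _ (INTB _ _ icY icmu) irY'.
rewrite RintegralB//; last exact: INTB _ _ icY icmu.
rewrite RintegralB// RintegralB//.
have E1 : Rintegral P setT cY = Rintegral P setT cmg.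
  rewrite /Rintegral; congr fine.
  transitivity (\int[P]_w (\1_setT (X w) * (\1_G w * Y t w))%:E)%E.
    by apply: eq_integral => w _; rewrite indicT mul1r /cY bg.
  rewrite (CEG hmg measurableT).
  by apply: eq_integral => w _; rewrite indicT mul1r /cmg bg.
have mh : measurable_fun setT (fun y => Pm g y / Pm 0%N y).
  apply: measurable_funM => //; exact: measurableT_comp (@mV R) (mPm 0%N).
have E2 : Rintegral P setT rY = Rintegral P setT rm0.
  have iZ : P.-integrable setT (EFin \o (fun w => \1_G0 w * Y t w)).
    apply: (INTd _ (Y t)) => //; first by apply: measurable_funM; [exact: measurable_indic|exact: mY].
    by move=> w; apply: le_mul1 => //; exact: indic_le.
  have iF : P.-integrable setT (EFin \o (fun w => \1_G0 w * m0 (X w))) := INTG mG0 im0G.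
  have ihZ : P.-integrable setT (EFin \o (fun w => Pm g (X w) / Pm 0%N (X w) * (\1_G0 w * Y t w))).
    by apply: (eq_integrable measurableT) irY' => w _ /=; rewrite /rY b0 mulrA.
  have ihF : P.-integrable setT (EFin \o (fun w => Pm g (X w) / Pm 0%N (X w) * (\1_G0 w * m0 (X w)))).
    by apply: (eq_integrable measurableT) irm0' => w _ /=; rewrite /rm0 b0 mulrA.
  have := @DL _ _ Omega Xsp R P X mXX (fun w => \1_G0 w * Y t w)
    (fun w => \1_G0 w * m0 (X w)) (fun y => Pm g y / Pm 0%N y) _ _ mh iZ iF
    (fun A mA => CEG hm0 mA) ihZ ihF.
  have e1 : Rintegral P setT rY = Rintegral P setT (fun w => Pm g (X w) / Pm 0%N (X w) * (\1_G0 w * Y t w)).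
    by apply: eq_Rintegral => w _; rewrite /rY b0 mulrA.
  have e2 : Rintegral P setT rm0 = Rintegral P setT (fun w => Pm g (X w) / Pm 0%N (X w) * (\1_G0 w * m0 (X w))).
    by apply: eq_Rintegral => w _; rewrite /rm0 b0 mulrA.
  rewrite e1 e2; apply.
  - by apply: measurable_funM; [exact: measurable_indic|exact: mY].
  - by apply: measurable_funM; [exact: measurable_indic|exact: measurableT_comp].
rewrite E1 E2.
have mrc0 : measurable_fun setT (fun w => Pm g (X w) / Pm 0%N (X w) * (cohort D T 0 w)%:R).
  by apply: measurable_funM => //; exact: measurableT_comp mh mXX.
case: hcase => [hps|hmu]; last first.
  have e3 : Rintegral P setT cmu = Rintegral P setT cm0.
    rewrite /Rintegral; congr fine; apply: (ae_eq_integral _ _ measurableT).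
    - by apply/measurable_EFinP; apply: measurable_funM => //; exact: measurableT_comp.
    - by apply/measurable_EFinP; apply: measurable_funM => //; exact: measurableT_comp.
    by apply: filterS hmu => w h _; rewrite /cmu h.
  have e4 : Rintegral P setT rmu = Rintegral P setT rm0.
    rewrite /Rintegral; congr fine; apply: (ae_eq_integral _ _ measurableT).
    - by apply/measurable_EFinP; apply: measurable_funM => //; exact: measurableT_comp.
    - by apply/measurable_EFinP; apply: measurable_funM => //; exact: measurableT_comp.
    by apply: filterS hmu => w h _; rewrite /rmu h.
  rewrite e3 e4; lra.
have gT : (g <= T)%N by case/andP: hg.
have hpg := hps g gT.
have hp0 := hps 0%N (leq0n T).
have [me0 _ _ _] := he 0%N (leq0n T).
have [meg _ _ _] := he g gT.
have heg : {ae P, forall w, 0 <= e g (X w)}.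
  by apply: (POS (he g gT)) => w; exact: ler0n.
have hae : {ae P, forall w, Pm g (X w) = e g (X w) /\ Pm 0%N (X w) = e 0%N (X w) /\
                   0 < e 0%N (X w) /\ 0 <= e g (X w)}.
  have h12 := filterS2 (ae_filter_ringOfSetsType P) (fun w a b => conj a b) hpg hp0.
  have h34 := filterS2 (ae_filter_ringOfSetsType P) (fun w a b => conj a b) hepos heg.
  exact: (filterS2 (ae_filter_ringOfSetsType P) (fun w '(conj a b) '(conj c e') => conj a (conj b (conj c e'))) h12 h34).
have h0 (A : set Xsp) : measurable A ->
    (\int[P]_w (\1_A (X w) * (cohort D T 0 w)%:R)%:E =
     \int[P]_w (\1_A (X w) * pp (e 0%N (X w)))%:E)%E.
  move=> mA; rewrite (CE (he 0%N (leq0n T)) mA).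
  have mIA : measurable_fun setT (fun w => \1_A (X w) : R).
    by apply: measurableT_comp mXX; exact: measurable_indic.
  apply: (ae_eq_integral _ _ measurableT).
  - by apply/measurable_EFinP; apply: measurable_funM; [exact: mIA|exact: measurableT_comp me0 mXX].
  - apply/measurable_EFinP; apply: measurable_funM; first exact: mIA.
    exact: measurableT_comp mpp (measurableT_comp me0 mXX).
  by apply: filterS hepos => w h _; rewrite /pp (max_l (ltW h)).
have hgg (A : set Xsp) : measurable A ->
    (\int[P]_w (\1_A (X w) * (cohort D T g w)%:R)%:E =
     \int[P]_w (\1_A (X w) * pp (e g (X w)))%:E)%E.
  move=> mA; rewrite (CE (he g gT) mA).
  have mIA : measurable_fun setT (fun w => \1_A (X w) : R).
    by apply: measurableT_comp mXX; exact: measurable_indic.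
  apply: (ae_eq_integral _ _ measurableT).
  - by apply/measurable_EFinP; apply: measurable_funM; [exact: mIA|exact: measurableT_comp meg mXX].
  - apply/measurable_EFinP; apply: measurable_funM; first exact: mIA.
    exact: measurableT_comp mpp (measurableT_comp meg mXX).
  by apply: filterS heg => w h _; rewrite /pp (max_l h).
pose k := fun y => m0 y - mu y.
have mk : measurable_fun setT k by apply: measurable_funB.
have PSq (v : R -> R) : measurable_fun setT v -> (forall r, 0 <= v r) ->
   (\int[P]_w (Pm g (X w) / Pm 0%N (X w) * (cohort D T 0 w)%:R * v (k (X w)))%:E =
    \int[P]_w ((cohort D T g w)%:R * v (k (X w)))%:E)%E.
  move=> mv v0.
  apply: (PS mc0 mcg _ _ me0 meg (mPm g) (mPm 0%N) (measurableT_comp mv mk) _ h0 hgg hae hPm0).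
  - by move=> w; exact: ler0n.
  - by move=> w; exact: ler0n.
  - by move=> y; exact: v0.
have irk : P.-integrable setT (EFin \o (fun w => Pm g (X w) / Pm 0%N (X w) * (cohort D T 0 w)%:R * k (X w))).
  by apply: (eq_integrable measurableT) (INTB _ _ irm0' irmu') => w _ /=; rewrite /rm0 /rmu /k mulrBr.
have ick : P.-integrable setT (EFin \o (fun w => (cohort D T g w)%:R * k (X w))).
  by apply: (eq_integrable measurableT) (INTB _ _ icm0 icmu) => w _ /=; rewrite /cm0 /cmu /k mulrBr.
have irv (v : R -> R) : measurable_fun setT v -> (forall r, `|v r| <= `|r|) ->
    P.-integrable setT (EFin \o (fun w => Pm g (X w) / Pm 0%N (X w) * (cohort D T 0 w)%:R * v (k (X w)))).
  move=> mv vle; apply: (INTd _ _ _ _ irk).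
    by apply: measurable_funM => //; exact: measurableT_comp mv (measurableT_comp mk mXX).
  by move=> w; apply: le_mul2.
have icv (v : R -> R) : measurable_fun setT v -> (forall r, `|v r| <= `|r|) ->
    P.-integrable setT (EFin \o (fun w => (cohort D T g w)%:R * v (k (X w)))).
  move=> mv vle; apply: (INTd _ _ _ _ ick).
    by apply: measurable_funM => //; exact: measurableT_comp mv (measurableT_comp mk mXX).
  by move=> w; apply: le_mul2.
have Rv (v : R -> R) : measurable_fun setT v -> (forall r, 0 <= v r) ->
    (forall r, `|v r| <= `|r|) ->
    Rintegral P setT (fun w => Pm g (X w) / Pm 0%N (X w) * (cohort D T 0 w)%:R * v (k (X w))) =
    Rintegral P setT (fun w => (cohort D T g w)%:R * v (k (X w))).
  move=> mv v0 vle; apply: EFin_inj.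
  by rewrite -(RE _ (irv v mv vle)) -(RE _ (icv v mv vle)); exact: PSq.
have e5 : Rintegral P setT rm0 - Rintegral P setT rmu =
  Rintegral P setT (fun w => Pm g (X w) / Pm 0%N (X w) * (cohort D T 0 w)%:R * pp (k (X w))) -
  Rintegral P setT (fun w => Pm g (X w) / Pm 0%N (X w) * (cohort D T 0 w)%:R * nn (k (X w))).
  rewrite -RintegralB// -RintegralB//; last 2 first.
  - exact: irv mpp pp_le.
  - exact: irv mnn nn_le.
  by apply: eq_Rintegral => w _; rewrite /rm0 /rmu -!mulrBr ppnn.
have e6 : Rintegral P setT cm0 - Rintegral P setT cmu =
  Rintegral P setT (fun w => (cohort D T g w)%:R * pp (k (X w))) -
  Rintegral P setT (fun w => (cohort D T g w)%:R * nn (k (X w))).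
  rewrite -RintegralB// -RintegralB//; last 2 first.
  - exact: icv mpp pp_le.
  - exact: icv mnn nn_le.
  by apply: eq_Rintegral => w _; rewrite /cm0 /cmu -!mulrBr ppnn.
move: e5 e6; rewrite (Rv pp mpp pp_ge0 pp_le) (Rv nn mnn nn_ge0 nn_le); lra.
Qed.
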